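(* Blocker has a strategy ensuring $g_{\mathrm{ECB}}(n,K_3)\le (1+o(1))\frac{2n}{3}$ as $n\to\infty$.
   Context: Embedded Constructor-Blocker game: the vertices of $K_n$ are placed at the $n$-th roots of unity in the complex plane, and each edge is drawn as the straight chord inside the unit disk between its endpoints. Constructor and Blocker alternately claim previously unclaimed edges, Constructor moving first. Constructor may only claim an edge whose chord does not cross (in an interior point) any chord she has already claimed; Blocker may claim any unclaimed edge. The game ends when Constructor cannot claim any more edges or all edges are claimed. The score is the number of triangles in Constructor's graph at the end; Constructor maximizes it, Blocker minimizes it. $g_{\mathrm{ECB}}(n,K_3)$ denotes the score under optimal play. *)

(* Defs.v *)
From HB Require Import structures.
From mathcomp Require Import all_boot all_order all_algebra.
Set Implicit Arguments. Unset Strict Implicit. Unset Printing Implicit Defensive.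
Import Order.TTheory GRing.Theory Num.Theory.

(* Vertices of K_n are 'I_n; vertex k sits at the root of unity exp(2 pi i k/n).
   An edge is a pair (a, b) with a < b (the chord between the two points). *)
Definition edge (n : nat) := ('I_n * 'I_n)%type.

Definition edges (n : nat) : {set edge n} := [set e : edge n | e.1 < e.2].

(* Two chords of points in convex (circular) position cross in an interior
   point iff their endpoints are pairwise distinct and interleave in the
   cyclic order, i.e. a < c < b < d or c < a < d < b. *)
Definition cross n (e f : edge n) : bool :=
  ((e.1 < f.1) && (f.1 < e.2) && (e.2 < f.2)) ||
  ((f.1 < e.1) && (e.1 < f.2) && (f.2 < e.2)).

Definition triangles n (C : {set edge n}) : nat :=
  #|[set t : 'I_n * 'I_n * 'I_n |
      [&& t.1.1 < t.1.2, t.1.2 < t.2,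
          (t.1.1, t.1.2) \in C, (t.1.2, t.2) \in C & (t.1.1, t.2) \in C]]|.

(* Unclaimed edges, given Constructor's edges C and Blocker's edges B. *)
Definition unclaimed n (C B : {set edge n}) : {set edge n} :=
  [set e in edges n | (e \notin C) && (e \notin B)].

Definition avail n (C B : {set edge n}) : {set edge n} :=
  [set e in unclaimed C B | [forall f in C, ~~ cross e f]].

(* Upper bound used as the neutral starting value of the iterated minimum
   (every triangle count is at most this). *)
Definition topval n : nat := #|{: 'I_n * 'I_n * 'I_n}|.

(* Minimax value of the position (C, B) with [cturn] = Constructor to move,
   with fuel m (the number of still unclaimed edges suffices). *)
Fixpoint val n (m : nat) (C B : {set edge n}) (cturn : bool) : nat :=
  match m with
  | 0 => triangles C
  | m'.+1 =>
    if avail C B == set0 then triangles C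
    else if cturn then \max_(e in avail C B) val m' (e |: C) B false
    else \big[minn/topval n]_(e in unclaimed C B) val m' C (e |: B) true
  end.

Definition gECB (n : nat) : nat := @val n #|edges n| set0 set0 true.

(* Main.v *)
Require Import Defs.
From mathcomp Require Import all_boot all_order all_algebra.
From mathcomp Require Import zify lra.
Import Order.TTheory GRing.Theory Num.Theory.


Definition NC {n} (C : {set edge n}) := forall e f, e \in C -> f \in C -> ~~ cross e f.

Definition tri {n} (C : {set edge n}) : {set 'I_n * 'I_n * 'I_n} :=
  [set t : 'I_n * 'I_n * 'I_n |
      [&& t.1.1 < t.1.2, t.1.2 < t.2,
          (t.1.1, t.1.2) \in C, (t.1.2, t.2) \in C & (t.1.1, t.2) \in C]].

Lemma mid_inj {n} (C : {set edge n}) : NC C -> {in tri C &, injective (fun t => t.1.2)}.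
Proof.
move=> nc [[a b] c] [[a' b'] c']; rewrite !inE /=.
move=> /and5P[ab bc Hab Hbc Hac] /and5P[ab' bc' Hab' Hbc' Hac'] eb; subst b'.
have ea : a = a'.
  apply: val_inj => /=.
  have := nc _ _ Hab' Hac; have := nc _ _ Hab Hac'; rewrite /cross /=; lia.
subst a'.
have ec : c = c'.
  apply: val_inj => /=.
  have := nc _ _ Hac Hbc'; have := nc _ _ Hac' Hbc; rewrite /cross /=; lia.
by subst c'.
Qed.

Lemma mid_excl {n} {C : {set edge n}} {x y : 'I_n} : NC C -> val y = (val x).+1 ->
  (x, y) \notin C -> x \in [set t.1.2 | t in tri C] -> y \in [set t.1.2 | t in tri C] -> False.
Proof.
move=> nc exy nxy /imsetP[[[a b] c] T1 ex] /imsetP[[[a' b'] c'] T2 ey].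
rewrite /= in ex ey; subst b b'.
move: T1 T2; rewrite !inE /=.
move=> /and5P[ab bc Hab Hbc Hac] /and5P[ab' bc' Hab' Hbc' Hac'].
have cy : c != y by apply: contraNneq nxy => <-.
have ax : a' != x by apply: contraNneq nxy => <-.
have := nc _ _ Hab' Hbc; rewrite /cross /=.
move/eqP: cy => cy; move/eqP: ax => ax.
have cy' : (c : nat) <> y by move=> h; apply: cy; apply: val_inj.
have ax' : (a' : nat) <> x by move=> h; apply: ax; apply: val_inj.
move: exy => /= exy.
lia.
Qed.

Definition P1 n' k : edge n'.+1 := (inord (3*k), inord (3*k+1)).
Definition P2 n' k : edge n'.+1 := (inord (3*k+1), inord (3*k+2)).
Definition Fin n' k (C : {set edge n'.+1}) := (P1 n' k \notin C) || (P2 n' k \notin C).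

Lemma bnd {n k} : k < n %/ 3 -> 3*k+2 < n. Proof. lia. Qed.

Lemma tri_bound n' (C : {set edge n'.+1}) : NC C ->
  (forall k, k < n'.+1 %/ 3 -> Fin n' k C) -> triangles C <= n'.+1 - n'.+1 %/ 3.
Proof.
move=> nc fin.
set M := [set t.1.2 | t in tri C].
have cardM : #|M| = triangles C by rewrite card_in_imset //; exact: mid_inj.
pose miss (k : 'I_(n'.+1 %/ 3)) : 'I_n'.+1 :=
  if inord (3*k) \in M then (if inord (3*k+1) \in M then inord (3*k+2) else inord (3*k+1))
  else inord (3*k).
have missM : forall k, miss k \notin M.
  move=> k; have kb := bnd (ltn_ord k).
  rewrite /miss; case: ifP => h0 //; first case: ifP => h1 //.
  - apply/negP => h2.
    have /orP[] := fin _ (ltn_ord k).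
    + move=> h; apply: (mid_excl nc _ h h0 h1); rewrite /= !inordK; lia.
    + move=> h; apply: (mid_excl nc _ h h1 h2); rewrite /= !inordK; lia.
  - by rewrite h1.
  - by rewrite h0.
have missv : forall k, val (miss k) %/ 3 = k.
  move=> k; have kb := bnd (ltn_ord k).
  rewrite /miss; case: ifP => _; first case: ifP => _; rewrite /= inordK; lia.
have miss_inj : injective miss.
  by move=> k1 k2 e; apply: val_inj; rewrite /= -(missv k1) -(missv k2) e.
set X := [set miss k | k : 'I_(n'.+1 %/ 3)].
have cX : #|X| = n'.+1 %/ 3 by rewrite card_imset // card_ord.
have sub : M \subset ~: X.
  apply/subsetP => x xM; rewrite inE; apply/imsetP => -[k _ ek].
  by move: (missM k); rewrite -ek xM.
rewrite -cardM; apply: leq_trans (subset_leq_card sub) _.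
by rewrite cardsCs setCK cX card_ord.
Qed.

Lemma crossC {n} (e f : edge n) : cross e f = cross f e.
Proof. by rewrite /cross orbC. Qed.

Lemma cross_irr {n} (e : edge n) : ~~ cross e e.
Proof. rewrite /cross; lia. Qed.

Lemma NC_add {n} (C B : {set edge n}) e : NC C -> e \in avail C B -> NC (e |: C).
Proof.
move=> nc; rewrite inE => /andP[_ /forall_inP h] f g.
rewrite !in_setU1 => /orP[/eqP->|fC] /orP[/eqP->|gC].
- exact: cross_irr.
- exact: h.
- rewrite crossC; exact: h.
- exact: nc.
Qed.

Definition Good n' k (C B : {set edge n'.+1}) :=
  [|| (P1 n' k \in B) && (P1 n' k \notin C), (P2 n' k \in B) && (P2 n' k \notin C) |
      [&& P1 n' k \notin C, P1 n' k \notin B, P2 n' k \notin C & P2 n' k \notin B]].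

Lemma P1P2 {n' k} : k < n'.+1 %/ 3 -> P1 n' k != P2 n' k.
Proof.
move=> /bnd kb; apply/eqP => -[] /(congr1 (@nat_of_ord _)); rewrite !inordK; lia.
Qed.

Lemma P11 {n' j k} : j < n'.+1 %/ 3 -> k < n'.+1 %/ 3 -> P1 n' j = P1 n' k -> j = k.
Proof. move=> /bnd jb /bnd kb -[] /(congr1 (@nat_of_ord _)); rewrite !inordK; lia. Qed.
Lemma P22 {n' j k} : j < n'.+1 %/ 3 -> k < n'.+1 %/ 3 -> P2 n' j = P2 n' k -> j = k.
Proof. move=> /bnd jb /bnd kb -[] /(congr1 (@nat_of_ord _)); rewrite !inordK; lia. Qed.
Lemma P12 {n' j k} : j < n'.+1 %/ 3 -> k < n'.+1 %/ 3 -> P1 n' j <> P2 n' k.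
Proof. move=> /bnd jb /bnd kb -[] /(congr1 (@nat_of_ord _)); rewrite !inordK; lia. Qed.

Lemma P_edge1 {n' k} : k < n'.+1 %/ 3 -> P1 n' k \in edges n'.+1.
Proof. move=> /bnd kb; rewrite inE /= !inordK; lia. Qed.
Lemma P_edge2 {n' k} : k < n'.+1 %/ 3 -> P2 n' k \in edges n'.+1.
Proof. move=> /bnd kb; rewrite inE /= !inordK; lia. Qed.

Lemma Good_Fin n' k C B : Good n' k C B -> Fin n' k C.
Proof. by rewrite /Good /Fin => /or3P[/andP[_ ->]|/andP[_ ->]|/and4P[-> _ _ _]] //; rewrite orbT. Qed.

Lemma Fin_step n' k (C B : {set edge n'.+1}) e : k < n'.+1 %/ 3 ->
  Good n' k C B -> e \notin C -> e \notin B -> Fin n' k (e |: C).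
Proof.
move=> kb G eC eB; rewrite /Fin !in_setU1.
have d := P1P2 kb.
case/or3P: G => [/andP[p1B p1C]|/andP[p2B p2C]|/and4P[p1C p1B p2C p2B]].
- have : P1 n' k != e by apply: contraNneq eB => <-.
  by rewrite eq_sym => /negbTE->; rewrite p1C.
- have : P2 n' k != e by apply: contraNneq eB => <-.
  by rewrite eq_sym => /negbTE->; rewrite p2C orbT.
- case: (eqVneq e (P1 n' k)) => [->|ne]; last by rewrite p1C.
  by rewrite eq_sym (negbTE d) p2C orbT.
Qed.

Lemma Good_step n' k (C B : {set edge n'.+1}) e f : k < n'.+1 %/ 3 ->
  Good n' k C B -> e \notin C -> e \notin B ->
  (e == P1 n' k) && (P2 n' k \in unclaimed (e |: C) B) ==> (f == P2 n' k) ->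
  (e == P2 n' k) && (P1 n' k \in unclaimed (e |: C) B) ==> (f == P1 n' k) ->
  Good n' k (e |: C) (f |: B).
Proof.
move=> kb G eC eB H1 H2.
have d := P1P2 kb.
rewrite /Good !in_setU1.
case/or3P: G => [/andP[p1B p1C]|/andP[p2B p2C]|/and4P[p1C p1B p2C p2B]].
- have : P1 n' k != e by apply: contraNneq eB => <-.
  by rewrite eq_sym => /negbTE->; rewrite p1B p1C orbT.
- have : P2 n' k != e by apply: contraNneq eB => <-.
  by rewrite eq_sym => /negbTE->; rewrite p2B p2C !orbT.
- case: (eqVneq e (P1 n' k)) => [ee|ne1].
    subst e; move: H1; rewrite eqxx /= /unclaimed in_set P_edge2 //= in_setU1 eq_sym (negbTE d) p2C p2B /=.
    by move=> /eqP->; rewrite eqxx /= ?(negbTE d) ?orbT ?andbT.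
  case: (eqVneq e (P2 n' k)) => [ee|ne2].
    subst e; move: H2; rewrite eqxx /= /unclaimed in_set P_edge1 //= in_setU1 (negbTE d) p1C p1B /=.
    by move=> /eqP->; rewrite eqxx /= ?(negbTE d) ?p1C ?orbT ?andbT.
  rewrite ?p1C ?p1B ?p2C ?p2B /=.
  case: (eqVneq (P1 n' k) f) => [<-|] //= _.
  case: (eqVneq (P2 n' k) f) => [_|_]; first by rewrite /= !orbT.
  by rewrite (negbTE p1B) (negbTE p2B).
Qed.

Lemma bigmin_le (T : finType) (A : {set T}) (F : T -> nat) x0 f0 :
  f0 \in A -> \big[minn/x0]_(i in A) F i <= F f0.
Proof.
move=> fA; rewrite -big_filter.
have : f0 \in [seq i <- index_enum T | i \in A] by rewrite mem_filter fA mem_index_enum.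
elim: [seq i <- index_enum T | i \in A] => [//|i s IHs].
rewrite in_cons big_cons => /orP[/eqP->|fs]; first exact: geq_minl.
exact: leq_trans (geq_minr _ _) (IHs fs).
Qed.

Lemma game n' m (C B : {set edge n'.+1}) : NC C ->
  (forall k, k < n'.+1 %/ 3 -> Good n' k C B) -> Defs.val m C B true <= n'.+1 - n'.+1 %/ 3.
Proof.
elim/ltn_ind: m C B => m IH C B nc gd.
have finC : forall k, k < n'.+1 %/ 3 -> Fin n' k C by move=> k kb; apply: Good_Fin; exact: gd.
case: m IH => [|m] IH /=; first exact: tri_bound.
case: ifP => _; first exact: tri_bound.
apply/bigmax_leqP => e eA.
have nc' := @NC_add _ C B e nc eA.
have eU : e \in unclaimed C B by move: eA; rewrite inE => /andP[].
have [eC eB] : e \notin C /\ e \notin B by move: eU; rewrite inE => /and3P[].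
have fin' : forall k, k < n'.+1 %/ 3 -> Fin n' k (e |: C).
  by move=> k kb; exact: (@Fin_step n' k C B e kb (gd k kb) eC eB).
case: m IH => [|m] IH /=; first exact: tri_bound.
case: ifP => hav; first exact: tri_bound.
set U := unclaimed (e |: C) B.
have [g gA] : exists g, g \in avail (e |: C) B by apply/set0Pn; rewrite hav.
have gU : g \in U by move: gA; rewrite inE => /andP[].
have [f0 f0U gd'] : exists2 f0, f0 \in U & forall k, k < n'.+1 %/ 3 -> Good n' k (e |: C) (f0 |: B).
  case: (boolP [exists k : 'I_(n'.+1 %/ 3), ((e == P1 n' k) && (P2 n' k \in U)) ||
                                         ((e == P2 n' k) && (P1 n' k \in U))]).
  - move=> /existsP[k /orP[/andP[/eqP ek kU]|/andP[/eqP ek kU]]].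
    + exists (P2 n' k) => // j jb; apply: Good_step => //; first exact: gd.
      * apply/implyP => /andP[/eqP ej _]; apply/eqP; congr P2.
        by symmetry; apply: (P11 jb (ltn_ord k)); rewrite -ej.
      * apply/implyP => /andP[/eqP ej _]; exfalso.
        by apply: (P12 (ltn_ord k) jb); rewrite -ej.
    + exists (P1 n' k) => // j jb; apply: Good_step => //; first exact: gd.
      * apply/implyP => /andP[/eqP ej _]; exfalso.
        by apply: (P12 jb (ltn_ord k)); rewrite -ej.
      * apply/implyP => /andP[/eqP ej _]; apply/eqP; congr P1.
        by symmetry; apply: (P22 jb (ltn_ord k)); rewrite -ej.
  - rewrite negb_exists => /forallP nex.
    exists g => // j jb; apply: Good_step => //; first exact: gd.
    + have := nex (Ordinal jb); rewrite negb_or => /andP[h _].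
      by rewrite (negbTE h).
    + have := nex (Ordinal jb); rewrite negb_or => /andP[_ h].
      by rewrite (negbTE h).
apply: leq_trans (@bigmin_le _ _ _ _ _ f0U) _.
by apply: IH => //; rewrite ltnS leqnSn.
Qed.

Lemma gECB_bound n' : gECB n'.+1 <= n'.+1 - n'.+1 %/ 3.
Proof.
apply: game.
- by move=> e f; rewrite inE.
- move=> k kb; rewrite /Good !inE; by rewrite !orbT.
Qed.

Local Open Scope ring_scope.

Theorem proposition4p3 :
  forall eps : rat, 0 < eps ->
  exists N : nat, forall n : nat, (N <= n)%N ->
    (gECB n)%:R <= (1 + eps) * (2 * n%:R / 3) :> rat.
Proof.
move=> eps eps0.
exists (Num.truncn (eps^-1)).+1 => -[|n'] // hn.
have h1 : (eps^-1 < n'.+1%:R :> rat).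
  by rewrite -truncn_lt_nat ?invr_ge0 ?ltW.
have h2 : 1 < eps * n'.+1%:R.
  have h := h1; rewrite -(ltr_pM2l eps0) mulfV ?gt_eqF // in h.
have h3 : (3 * gECB n'.+1 <= 2 * n'.+1 + 2)%N.
  have := gECB_bound n'; lia.
have h4 : 3 * (gECB n'.+1)%:R <= 2 * n'.+1%:R + 2 :> rat.
  by move: h3; rewrite -(ler_nat rat) !natrD !natrM => h; lra.
set g := (gECB n'.+1)%:R in h4 *; set x := n'.+1%:R in h2 h4 *.
lra.
Qed.
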